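(* Let $X,Y\in\mathbf{R}$ with $Y\ge1$, and let $f\colon(X,X+Y]\to\mathbf{R}$ be a real function with continuous derivatives up to order $2$ such that $0<\lambda\le f''(x)\le\Lambda$ for $X<x\le X+Y$. Then \[ \Bigl|\frac{1}{Y}\sum_{X<n\le X+Y}e(f(n))\Bigr|\le A\Bigl\{\Bigl(\frac{\Lambda^2}{\lambda}\Bigr)^{1/2}+2(\lambda Y^2)^{-1/2}\Bigr\}, \] where $A=\frac{2}{\sqrt\pi}\bigl(1+\sqrt{1+3\pi/8}\bigr)=2.79368\ldots$.
   Context: $e(x)=e^{2\pi i x}$; the sum runs over integers $n$. *)

(* Defs.v *)
From Stdlib Require Import Reals List ZArith.
From Coquelicot Require Import Coquelicot.
Open Scope R_scope.

Definition e (x : R) : C := (cos (2 * PI * x), sin (2 * PI * x)).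

(* Sum over the integers n with X < n <= X + Y of g n.
   Int_part r is floor r, and up r = floor r + 1 is the least integer > r,
   so these integers are up X, up X + 1, ..., Int_part (X + Y). *)
Definition sum_int_range (X Y : R) (g : Z -> C) : C :=
  let N := Z.to_nat (Int_part (X + Y) - up X + 1) in
  fold_right (fun k acc => Cplus (g (up X + Z.of_nat k)%Z) acc) (RtoC 0)
             (seq 0 N).

Definition Ioc (a b : R) (x : R) : Prop := a < x <= b.

Definition deriv_within (D : R -> Prop) (f : R -> R) (x l : R) : Prop :=
  limit1_in (fun y => (f y - f x) / (y - x)) (fun y => D y /\ y <> x) l x.

Definition cont_within (D : R -> Prop) (g : R -> R) (x : R) : Prop :=
  limit1_in g D (g x) x.

Definition A_const : R := 2 / sqrt PI * (1 + sqrt (1 + 3 * PI / 8)).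

(* Main.v *)
Require Import Defs.
From Stdlib Require Import Reals List ZArith Lra Lia Psatz.
From Coquelicot Require Import Coquelicot.
Open Scope R_scope.

Fixpoint csum (h : nat -> C) (a n : nat) : C :=
  match n with O => RtoC 0 | S n => Cplus (h a) (csum h (S a) n) end.

Lemma fold_csum (g : nat -> C) a n :
  fold_right (fun k acc => Cplus (g k) acc) (RtoC 0) (seq a n) = csum g a n.
Proof. revert a; induction n; intros a; simpl; [reflexivity| now rewrite IHn]. Qed.

Lemma csum_split h n m : forall a, csum h a (n + m) = Cplus (csum h a n) (csum h (a + n) m).
Proof.
  induction n; intros a; simpl.
  - rewrite Nat.add_0_r. now rewrite Cplus_0_l.
  - rewrite IHn. replace (S a + n)%nat with (a + S n)%nat by lia. now rewrite Cplus_assoc.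
Qed.

Lemma csum_S h a n : csum h a (S n) = Cplus (csum h a n) (h (a + n)%nat).
Proof.
  replace (S n) with (n + 1)%nat by lia. rewrite csum_split. simpl.
  f_equal. destruct (h (a+n)%nat) as [x y]. unfold Cplus, RtoC; simpl; f_equal; ring.
Qed.

Lemma csum_triv h a n : (forall k, Cmod (h k) <= 1) -> Cmod (csum h a n) <= INR n.
Proof.
  intros H; revert a; induction n; intros a; simpl.
  - rewrite Cmod_0; lra.
  - eapply Rle_trans; [apply Cmod_triangle|]. specialize (IHn (S a)). specialize (H a).
    destruct n; simpl in *; lra.
Qed.

Lemma e_add x y : e (x + y) = Cmult (e x) (e y).
Proof.
  unfold e, Cmult; simpl. replace (2 * PI * (x + y)) with (2*PI*x + 2*PI*y) by ring.
  rewrite cos_plus, sin_plus. f_equal; ring.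
Qed.

Lemma Cmod_e x : Cmod (e x) = 1.
Proof.
  unfold Cmod, e; simpl. pose proof (sin2_cos2 (2*PI*x)). unfold Rsqr in H.
  replace (cos (2 * PI * x) * (cos (2 * PI * x) * 1) + sin (2 * PI * x) * (sin (2 * PI * x) * 1)) with 1 by lra.
  apply sqrt_1.
Qed.

Lemma e_int x z : e (x + IZR z) = e x.
Proof.
  rewrite e_add. assert (Hs : sin (PI * IZR z) = 0) by (apply sin_eq_0_1; exists z; ring).
  unfold e at 2. replace (2 * PI * IZR z) with (2 * (PI * IZR z)) by ring.
  rewrite cos_2a_sin, sin_2a, Hs. destruct (e x) as [a b]. unfold Cmult; simpl. f_equal; ring.
Qed.

Lemma cot_mono a b : 0 < a -> a <= b -> b < PI -> cos b / sin b <= cos a / sin a.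
Proof.
  intros Ha Hab Hb.
  assert (sa : 0 < sin a) by (apply sin_gt_0; lra).
  assert (sb : 0 < sin b) by (apply sin_gt_0; lra).
  assert (Hs : 0 <= sin (b - a)) by (apply sin_ge_0; lra).
  rewrite sin_minus in Hs.
  apply Rmult_le_reg_r with (sin a * sin b). nra.
  replace (cos b / sin b * (sin a * sin b)) with (cos b * sin a) by (field; lra).
  replace (cos a / sin a * (sin a * sin b)) with (cos a * sin b) by (field; lra).
  lra.
Qed.

Lemma cot_bound d t : 0 < d <= 1/2 -> PI * d <= t <= PI - PI * d ->
  Rabs (cos t / sin t) <= cos (PI * d) / sin (PI * d).
Proof.
  intros Hd Ht. pose proof PI_RGT_0.
  assert (0 < PI * d) by nra.
  apply Rabs_le; split.
  - assert (H1 := cot_mono t (PI - PI * d)). rewrite sin_PI_x, Rtrigo_facts.cos_pi_minus in H1.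
    replace (- (cos (PI * d) / sin (PI * d))) with (- cos (PI * d) / sin (PI * d)) by (unfold Rdiv; ring).
    apply H1; nra.
  - apply cot_mono; nra.
Qed.

Lemma Cmod_im y : Cmod (0, y) = Rabs y.
Proof. unfold Cmod; simpl. rewrite <- sqrt_Rsqr_abs. unfold Rsqr. f_equal. ring. Qed.

Section KL.
Variable phi : nat -> R.
Variable K : Z.
Variable del : R.
Hypothesis Hdel : 0 < del <= 1/2.

Let dd k := phi (S k) - phi k - IZR K.
Let g k := cos (PI * dd k) / sin (PI * dd k).
Let cc k : C := (-1/2, - g k / 2).
Let u k := e (phi k).
Let G := cos (PI * del) / sin (PI * del).

Lemma Cmod_u k : Cmod (u k) = 1.
Proof. apply Cmod_e. Qed.

Lemma sin_del_pos : 0 < sin (PI * del).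
Proof. pose proof PI_RGT_0. apply sin_gt_0; nra. Qed.

Lemma KL_F1 k : del <= dd k <= 1 - del ->
  Cminus (u k) (Cmult (cc k) (u (S k))) = Copp (Cmult (cc k) (u k)).
Proof.
  intros Hk. pose proof PI_RGT_0.
  assert (sp : 0 < sin (PI * dd k)) by (apply sin_gt_0; nra).
  assert (HE : u (S k) = Cmult (u k) (e (dd k))).
  { unfold u. replace (phi (S k)) with ((phi k + dd k) + IZR K) by (unfold dd; ring).
    rewrite e_int, e_add. reflexivity. }
  assert (Hc : Cmult (cc k) (Cminus (e (dd k)) 1) = 1).
  { unfold cc, g, e. replace (2 * PI * dd k) with (2 * (PI * dd k)) by ring.
    rewrite cos_2a_sin, sin_2a. unfold Cmult, Cminus, Cplus, Copp, RtoC; simpl.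
    pose proof (sin2_cos2 (PI * dd k)). unfold Rsqr in H0.
    f_equal; field_simplify; try lra; nra. }
  rewrite HE. 
  replace (Cmult (cc k) (Cmult (u k) (e (dd k)))) with
     (Cplus (Cmult (u k) (Cmult (cc k) (Cminus (e (dd k)) 1))) (Cmult (cc k) (u k))) by ring.
  rewrite Hc. ring.
Qed.

Lemma KL_cc k : del <= dd k <= 1 - del -> Cmod (cc k) <= 1 / (2 * sin (PI * del)).
Proof.
  intros Hk. pose proof sin_del_pos as sp. pose proof PI_RGT_0.
  assert (Hg : Rabs (g k) <= G) by (apply cot_bound; auto; nra).
  assert (Hg2 : g k ^ 2 <= G ^ 2).
  { rewrite <- (pow2_abs (g k)). assert (0 <= Rabs (g k)) by apply Rabs_pos. nra. }
  unfold Cmod, cc; simpl.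
  rewrite <- (sqrt_pow2 (1 / (2 * sin (PI * del)))).
  2: { apply Rlt_le, Rdiv_lt_0_compat; lra. }
  apply sqrt_le_1_alt.
  assert (E : (1 / (2 * sin (PI * del))) ^ 2 = 1/4 + G^2/4).
  { unfold G. pose proof (sin2_cos2 (PI * del)). unfold Rsqr in H0. field_simplify; try lra.
    replace (sin (PI * del) ^ 2) with (1 - cos (PI * del) ^ 2) by nra. field. nra. }
  rewrite E. nra.
Qed.

Lemma KL_main p n :
  (forall k, (p <= k <= p + n)%nat -> del <= dd k <= 1 - del) ->
  (forall k, (p <= k < p + n)%nat -> dd k <= dd (S k)) ->
  Cmod (csum u p (S n)) <= 1 / sin (PI * del) + G.
Proof.
  intros Hr Hm. pose proof sin_del_pos as sp. pose proof PI_RGT_0.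
  assert (Hgm : forall k, (p <= k < p + n)%nat -> g (S k) <= g k).
  { intros k Hk. unfold g. apply cot_mono.
    - assert (H1 := Hr k ltac:(lia)). nra.
    - apply Hm in Hk. nra.
    - assert (H1 := Hr (S k) ltac:(lia)). nra. }
  assert (Hgb : forall k, (p <= k <= p + n)%nat -> Rabs (g k) <= G).
  { intros k Hk. apply cot_bound; auto. assert (H1 := Hr k Hk). nra. }
  assert (Cl : forall j, (j <= n)%nat ->
     Cmod (Cminus (csum u p (S j)) (Cmult (cc (p + j)%nat) (u (S (p + j))))) <=
     Cmod (cc p) + (g p - g (p + j)%nat) / 2).
  { induction j; intros Hj.
    - rewrite Nat.add_0_r. simpl.
      replace (Cplus (u p) 0) with (u p) by ring.
      rewrite KL_F1 by (apply Hr; lia). rewrite Cmod_opp, Cmod_mult.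
      rewrite Cmod_u. lra.
    - rewrite csum_S.
      replace (Cminus (Cplus (csum u p (S j)) (u (p + S j)%nat))
                (Cmult (cc (p + S j)%nat) (u (S (p + S j)))))
        with (Cplus (Cminus (csum u p (S j)) (Cmult (cc (p + j)%nat) (u (S (p + j)))))
               (Cplus (Cmult (cc (p + j)%nat) (u (p + S j)%nat))
                      (Cminus (u (p + S j)%nat) (Cmult (cc (p + S j)%nat) (u (S (p + S j)))))))
        by (replace (S (p + j)) with (p + S j)%nat by lia; ring).
      rewrite KL_F1 by (apply Hr; lia).
      eapply Rle_trans; [apply Cmod_triangle|].
      replace (Cplus (Cmult (cc (p + j)%nat) (u (p + S j)%nat)) (Copp (Cmult (cc (p + S j)%nat) (u (p + S j)%nat))))
        with (Cmult (Cminus (cc (p + j)%nat) (cc (p + S j)%nat)) (u (p + S j)%nat)) by ring.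
      rewrite Cmod_mult. rewrite Cmod_u.
      assert (E : Cminus (cc (p + j)%nat) (cc (p + S j)%nat) = (0, (g (p + S j)%nat - g (p + j)%nat) / 2)).
      { unfold cc, Cminus, Cplus, Copp; simpl. f_equal; field. }
      rewrite E, Cmod_im.
      assert (H1 := Hgm (p + j)%nat ltac:(lia)). replace (S (p + j)) with (p + S j)%nat in H1 by lia.
      rewrite Rabs_left1 by lra.
      specialize (IHj ltac:(lia)). lra. }
  specialize (Cl n (le_n n)).
  replace (csum u p (S n)) with (Cplus (Cminus (csum u p (S n)) (Cmult (cc (p + n)%nat) (u (S (p + n)))))
                                        (Cmult (cc (p + n)%nat) (u (S (p + n))))) by ring.
  eapply Rle_trans; [apply Cmod_triangle|].
  rewrite Cmod_mult. rewrite Cmod_u.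
  assert (C1 := KL_cc p (Hr p ltac:(lia))).
  assert (C2 := KL_cc (p + n)%nat (Hr (p+n)%nat ltac:(lia))).
  assert (B1 := Hgb p ltac:(lia)). assert (B2 := Hgb (p+n)%nat ltac:(lia)).
  apply Rabs_le_between in B1. apply Rabs_le_between in B2.
  assert (1 / (2 * sin (PI * del)) + 1 / (2 * sin (PI * del)) = 1 / sin (PI * del)) by (field; lra).
  lra.
Qed.

End KL.

Lemma Int_part_mono x y : x <= y -> (Int_part x <= Int_part y)%Z.
Proof.
  intros H. destruct (base_Int_part x) as [A1 A2]. destruct (base_Int_part y) as [B1 B2].
  assert (IZR (Int_part x) < IZR (Int_part y + 1)) by (rewrite plus_IZR; lra).
  apply lt_IZR in H0. lia.
Qed.

Section Outer.
Variable phi : nat -> R.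
Variable lam del : R.
Variable m : nat.
Hypothesis Hlam : 0 < lam.
Hypothesis Hdel : 0 < del <= 1/2.
Let d k := phi (S k) - phi k.
Hypothesis Hstep : forall k, (S k < m)%nat -> lam <= d (S k) - d k.
Let u k := e (phi k).
Let Bk := 1 / sin (PI * del) + cos (PI * del) / sin (PI * del).
Let C0 := 2 * del / lam + 1 + Bk.

Lemma Bk_pos : 0 <= Bk.
Proof.
  pose proof PI_RGT_0. assert (0 < sin (PI * del)) by (apply sin_gt_0; nra).
  assert (0 <= cos (PI * del)) by (apply cos_ge_0; nra).
  unfold Bk. assert (0 < 1 / sin (PI * del)) by (apply Rdiv_lt_0_compat; lra).
  assert (0 <= cos (PI * del) / sin (PI * del)) by (apply Rdiv_le_0_compat; lra). lra.
Qed.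

Lemma C0_pos : 0 <= C0.
Proof. pose proof Bk_pos. unfold C0. assert (0 <= 2 * del / lam) by (apply Rdiv_le_0_compat; lra). lra. Qed.

Lemma d_grow a j : (a + j < m)%nat -> INR j * lam <= d (a + j)%nat - d a.
Proof.
  induction j; intros H.
  - rewrite Nat.add_0_r. simpl. lra.
  - rewrite S_INR. replace (a + S j)%nat with (S (a + j)) by lia.
    specialize (Hstep (a + j)%nat ltac:(lia)). specialize (IHj ltac:(lia)). lra.
Qed.

Lemma d_mono k : (S k < m)%nat -> d k <= d (S k).
Proof. intros H. specialize (Hstep k H). lra. Qed.

Lemma near_bound a n K : (a + n <= m)%nat ->
  (forall k, (a <= k < a + n)%nat -> IZR K - del <= d k < IZR K + del) ->
  Cmod (csum u a n) <= 2 * del / lam + 1.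
Proof.
  intros Hm Hk. eapply Rle_trans; [apply csum_triv; intros; right; apply Cmod_e|].
  destruct n as [|n].
  - simpl. assert (0 <= 2 * del / lam) by (apply Rdiv_le_0_compat; lra). lra.
  - assert (H1 := d_grow a n ltac:(lia)).
    assert (H2 := Hk a ltac:(lia)). assert (H3 := Hk (a + n)%nat ltac:(lia)).
    rewrite S_INR. assert (INR n < 2 * del / lam).
    { apply Rmult_lt_reg_r with lam; auto. unfold Rdiv. rewrite Rmult_assoc, Rinv_l by lra. lra. }
    lra.
Qed.

Lemma split_ex a n c : (a + n <= m)%nat ->
  exists j, (j <= n)%nat /\ (forall k, (a <= k < a + j)%nat -> d k < c) /\
            (forall k, (a + j <= k < a + n)%nat -> c <= d k).
Proof.
  induction n; intros Hm.
  - exists 0%nat. split; [lia|]. split; intros; lia.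
  - destruct (IHn ltac:(lia)) as [j [Hj [H1 H2]]].
    destruct (Rlt_or_le (d (a + n)%nat) c) as [Hc|Hc].
    + exists (S n). split; [lia|]. split.
      * intros k Hk. destruct (Nat.eq_dec k (a + n)) as [->|Hne]; auto.
        destruct (le_lt_dec (a + j) k).
        -- (* k in second part, but d k <= d (a+n) < c *)
           assert (Hmono : forall i, (k <= i <= a + n)%nat -> d k <= d i).
           { intros i Hi. induction i; [assert (k = 0)%nat by lia; subst; lra|].
             destruct (Nat.eq_dec k (S i)) as [<-|]; [lra|].
             assert (d i <= d (S i)) by (apply d_mono; lia). specialize (IHi ltac:(lia)). lra. }
           specialize (Hmono (a + n)%nat ltac:(lia)). lra.
        -- apply H1; lia.
      * intros; lia.
    + exists j. split; [lia|]. split; auto.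
      intros k Hk. destruct (Nat.eq_dec k (a + n)) as [->|Hne]; auto. apply H2; lia.
Qed.

Lemma block_bound a n K : (a + n <= m)%nat ->
  (forall k, (a <= k < a + n)%nat -> IZR K <= d k + del < IZR K + 1) ->
  Cmod (csum u a n) <= C0.
Proof.
  intros Hm Hk. destruct (split_ex a n (IZR K + del) Hm) as [j [Hj [H1 H2]]].
  replace n with (j + (n - j))%nat by lia. rewrite csum_split.
  eapply Rle_trans; [apply Cmod_triangle|].
  assert (N1 : Cmod (csum u a j) <= 2 * del / lam + 1).
  { apply (near_bound a j K); [lia|]. intros k Hk'. specialize (Hk k ltac:(lia)). specialize (H1 k Hk'). lra. }
  assert (N2 : Cmod (csum u (a + j) (n - j)) <= Bk).
  { destruct (n - j)%nat as [|n'] eqn:E.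
    - simpl. rewrite Cmod_0. apply Bk_pos.
    - unfold u, Bk. apply (KL_main phi K del Hdel (a + j) n').
      + intros k Hk'. specialize (Hk k ltac:(lia)). specialize (H2 k ltac:(lia)). fold (d k). lra.
      + intros k Hk'. fold (d k). fold (d (S k)). assert (d k <= d (S k)) by (apply d_mono; lia). lra. }
  unfold C0. lra.
Qed.

Let kap k := Int_part (d k + del).

Lemma kap_prop k : IZR (kap k) <= d k + del < IZR (kap k) + 1.
Proof. unfold kap. destruct (base_Int_part (d k + del)). lra. Qed.

Lemma outer_inv n : (S n <= m)%nat ->
  exists s, (s <= n)%nat /\ (forall k, (s <= k <= n)%nat -> kap k = kap n) /\
     Cmod (csum u 0 s) <= C0 * IZR (kap n - kap 0).
Proof.
  induction n; intros Hm.
  - exists 0%nat. split; [lia|]. split. intros k Hk. f_equal. lia.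
    simpl. rewrite Cmod_0, Z.sub_diag. simpl. lra.
  - destruct (IHn ltac:(lia)) as [s [Hs [H1 H2]]].
    assert (Hmono : (kap n <= kap (S n))%Z) by (apply Int_part_mono; assert (d n <= d (S n)) by (apply d_mono; lia); lra).
    destruct (Z.eq_dec (kap (S n)) (kap n)) as [E|E].
    + exists s. split; [lia|]. split.
      * intros k Hk. destruct (Nat.eq_dec k (S n)) as [->|]; auto. rewrite E. apply H1; lia.
      * rewrite E. auto.
    + exists (S n). split; [lia|]. split. intros k Hk. f_equal; lia.
      replace (S n) with (s + (S n - s))%nat by lia. rewrite csum_split.
      eapply Rle_trans; [apply Cmod_triangle|].
      assert (B : Cmod (csum u (0 + s) (S n - s)) <= C0).
      { apply (block_bound (0 + s) (S n - s) (kap n)); [lia|].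
        intros k Hk. rewrite <- (H1 k ltac:(lia)). apply kap_prop. }
      assert (IZR (kap n - kap 0) + 1 <= IZR (kap (S n) - kap 0)).
      { rewrite <- plus_IZR. apply IZR_le. lia. }
      pose proof C0_pos.
      assert (C0 * (IZR (kap n - kap 0) + 1) <= C0 * IZR (kap (S n) - kap 0)) by (apply Rmult_le_compat_l; lra).
      replace (kap (s + (S n - s))%nat) with (kap (S n)) by (f_equal; lia). lra.
Qed.

Lemma outer_bound n : (S n <= m)%nat ->
  Cmod (csum u 0 (S n)) <= C0 * (d n - d 0 + 2).
Proof.
  intros Hm. destruct (outer_inv n Hm) as [s [Hs [H1 H2]]].
  replace (S n) with (s + (S n - s))%nat by lia. rewrite csum_split.
  eapply Rle_trans; [apply Cmod_triangle|].
  assert (B : Cmod (csum u (0 + s) (S n - s)) <= C0).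
  { apply (block_bound (0 + s) (S n - s) (kap n)); [lia|].
    intros k Hk. rewrite <- (H1 k ltac:(lia)). apply kap_prop. }
  assert (IZR (kap n - kap 0) <= d n - d 0 + 1).
  { rewrite minus_IZR. pose proof (kap_prop n). pose proof (kap_prop 0). lra. }
  pose proof C0_pos.
  assert (C0 * (IZR (kap n - kap 0) + 1) <= C0 * (d n - d 0 + 2)) by (apply Rmult_le_compat_l; lra).
  lra.
Qed.

End Outer.

Lemma dw_to_dpl X Y f l x : X < x < X + Y ->
  deriv_within (Ioc X (X + Y)) f x l -> derivable_pt_lim f x l.
Proof.
  intros Hx H eps Heps. destruct (H eps Heps) as [alp [Halp Hc]].
  assert (Hp : 0 < Rmin alp (Rmin (x - X) (X + Y - x))).
  { apply Rmin_pos; [lra|]. apply Rmin_pos; lra. }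
  exists (mkposreal _ Hp). intros h Hh0 Hh. simpl in Hh.
  assert (A1 := Rmin_l alp (Rmin (x - X) (X + Y - x))).
  assert (A2 := Rmin_r alp (Rmin (x - X) (X + Y - x))).
  assert (A3 := Rmin_l (x - X) (X + Y - x)).
  assert (A4 := Rmin_r (x - X) (X + Y - x)).
  specialize (Hc (x + h)). simpl in Hc. unfold R_dist in Hc.
  replace (x + h - x) with h in Hc by ring.
  apply Hc. apply Rabs_def2 in Hh. split; [split|].
  - unfold Ioc. lra.
  - lra.
  - apply Rabs_def1; lra.
Qed.

Lemma dpl_shift f s c l : derivable_pt_lim f (s + c) l -> derivable_pt_lim (fun t => f (s + t)) c l.
Proof.
  intros H eps Heps. destruct (H eps Heps) as [dl Hd]. exists dl. intros h H1 H2.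
  replace (s + (c + h)) with (s + c + h) by ring. apply Hd; auto.
Qed.

Lemma second_diff (f f1 f2 : R -> R) a b lam Lam x :
  (forall y, a < y < b -> derivable_pt_lim f y (f1 y)) ->
  (forall y, a < y < b -> derivable_pt_lim f1 y (f2 y)) ->
  (forall y, a < y < b -> lam <= f2 y <= Lam) ->
  a < x -> x + 2 < b ->
  lam <= f (x + 2) - 2 * f (x + 1) + f x <= Lam.
Proof.
  intros D1 D2 B Ha Hb.
  set (g := fun t => f (x + 1 + t) - f (x + t)).
  set (g' := fun t => f1 (x + 1 + t) - f1 (x + t)).
  assert (Dg : forall c, 0 <= c <= 1 -> derivable_pt_lim g c (g' c)).
  { intros c Hc. unfold g, g'.
    apply (derivable_pt_lim_minus (fun t => f (x + 1 + t)) (fun t => f (x + t))).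
    - apply dpl_shift. apply D1. lra.
    - apply dpl_shift. apply D1. lra. }
  destruct (MVT_cor2 g g' 0 1 ltac:(lra) Dg) as [c [Hc1 Hc2]].
  assert (Dh : forall y, x + c <= y <= x + 1 + c -> derivable_pt_lim f1 y (f2 y)).
  { intros y Hy. apply D2. lra. }
  destruct (MVT_cor2 f1 f2 (x + c) (x + 1 + c) ltac:(lra) Dh) as [xi [Hx1 Hx2]].
  assert (Bx := B xi ltac:(lra)).
  unfold g, g' in Hc1.
  replace (x + 1 + 1) with (x + 2) in Hc1 by ring.
  replace (x + 1 + 0) with (x + 1) in Hc1 by ring.
  replace (x + 0) with x in Hc1 by ring.
  replace (x + 1 + c - (x + c)) with 1 in Hx1 by ring.
  lra.
Qed.

Lemma fact_R (n : nat) (z : Z) : Z.of_nat (fact n) = z -> INR (fact n) = IZR z.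
Proof. intros H. rewrite INR_IZR_INZ, H. reflexivity. Qed.

Lemma cos_ub_eq y : cos_ub y = 1 - y^2/2 + y^4/24 - y^6/720 + y^8/40320.
Proof.
  unfold cos_ub, cos_approx, cos_term. cbn [sum_f_R0].
  rewrite (fact_R (2*0) 1) by (vm_compute; reflexivity).
  rewrite (fact_R (2*1) 2) by (vm_compute; reflexivity).
  rewrite (fact_R (2*2) 24) by (vm_compute; reflexivity).
  rewrite (fact_R (2*3) 720) by (vm_compute; reflexivity).
  rewrite (fact_R (2*4) 40320) by (vm_compute; reflexivity).
  simpl Nat.mul. field.
Qed.

Lemma cos_lb_eq y : cos_lb y = 1 - y^2/2 + y^4/24 - y^6/720.
Proof.
  unfold cos_lb, cos_approx, cos_term. cbn [sum_f_R0].
  rewrite (fact_R (2*0) 1) by (vm_compute; reflexivity).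
  rewrite (fact_R (2*1) 2) by (vm_compute; reflexivity).
  rewrite (fact_R (2*2) 24) by (vm_compute; reflexivity).
  rewrite (fact_R (2*3) 720) by (vm_compute; reflexivity).
  simpl Nat.mul. field.
Qed.

Lemma sin_lb_eq y : sin_lb y = y - y^3/6 + y^5/120 - y^7/5040.
Proof.
  unfold sin_lb, sin_approx, sin_term. cbn [sum_f_R0].
  rewrite (fact_R (2*0+1) 1) by (vm_compute; reflexivity).
  rewrite (fact_R (2*1+1) 6) by (vm_compute; reflexivity).
  rewrite (fact_R (2*2+1) 120) by (vm_compute; reflexivity).
  rewrite (fact_R (2*3+1) 5040) by (vm_compute; reflexivity).
  simpl Nat.mul. simpl Nat.add. field.
Qed.

Lemma PI_gt : 3.1 < PI.
Proof.
  destruct (Rlt_or_le 3.1 PI) as [H|H]; auto. exfalso.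
  pose proof PI2_3_2.
  destruct (COS (PI/2)) as [C1 _]; try lra.
  rewrite cos_PI2, cos_lb_eq in C1.
  set (z := (PI/2)^2) in *.
  assert (Hz1 : 2.25 <= z) by (unfold z; nra).
  assert (Hz2 : z <= 2.4025) by (unfold z; nra).
  replace ((PI/2)^4) with (z^2) in C1 by (unfold z; ring).
  replace ((PI/2)^6) with (z^3) in C1 by (unfold z; ring).
  nra.
Qed.

Lemma PI_lt : PI < 3.2.
Proof.
  destruct (Rlt_or_le PI 3.2) as [H|H]; auto. exfalso.
  assert (C0 : 0 <= cos 1.6) by (apply cos_ge_0; lra).
  destruct (COS 1.6) as [_ C1]; try lra.
  rewrite cos_ub_eq in C1. lra.
Qed.

Lemma KL_num x : 0 < x <= 0.6 -> x * (1 + cos x) <= 2 * sin x.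
Proof.
  intros Hx. pose proof PI_gt.
  destruct (COS x) as [_ C1]; try lra.
  destruct (SIN x) as [S1 _]; try lra.
  rewrite cos_ub_eq in C1. rewrite sin_lb_eq in S1.
  assert (x * (1 + cos x) <= x * (1 + (1 - x^2/2 + x^4/24 - x^6/720 + x^8/40320))) by (apply Rmult_le_compat_l; lra).
  assert (x * (1 + (1 - x^2/2 + x^4/24 - x^6/720 + x^8/40320)) <= 2 * (x - x^3/6 + x^5/120 - x^7/5040)).
  { assert (0 < x^2) by nra. assert (x^2 <= 0.36) by nra.
    assert (E : x * (1 + (1 - x^2/2 + x^4/24 - x^6/720 + x^8/40320)) - 2 * (x - x^3/6 + x^5/120 - x^7/5040)
      = - (x * x^2) * (1/6 - x^2 * (1/40) + (x^2)^2 * (1/720 - 1/2520) - (x^2)^3/40320)) by field.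
    assert (0 <= 1/6 - x^2 * (1/40) + (x^2)^2 * (1/720 - 1/2520) - (x^2)^3/40320).
    { assert (0 <= (x^2)^2) by nra. assert ((x^2)^3 <= 1) by nra. nra. }
    assert (0 <= (x * x^2) * (1/6 - x^2 * (1/40) + (x^2)^2 * (1/720 - 1/2520) - (x^2)^3/40320)).
    { apply Rmult_le_pos; [nra|lra]. }
    lra. }
  lra.
Qed.

Lemma A_bound : 2.76 <= A_const.
Proof.
  pose proof PI_gt. pose proof PI_lt. unfold A_const.
  assert (S1 : sqrt PI <= 1.78886).
  { rewrite <- (sqrt_pow2 1.78886) by lra. apply sqrt_le_1_alt. lra. }
  assert (S0 : 0 < sqrt PI) by (apply sqrt_lt_R0; lra).
  assert (S2 : 1.4705 <= sqrt (1 + 3 * PI / 8)).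
  { rewrite <- (sqrt_pow2 1.4705) by lra. apply sqrt_le_1_alt. lra. }
  assert (2 / 1.78886 <= 2 / sqrt PI).
  { apply Rmult_le_compat_l; [lra|]. apply Rinv_le_contravar; lra. }
  assert (1.118 <= 2 / 1.78886) by (apply Rmult_le_reg_r with 1.78886; [lra|]; unfold Rdiv; rewrite Rmult_assoc, Rinv_l; lra).
  nra.
Qed.

Lemma final_num A s q Lam Y : 2.76 <= A -> 1.25 <= q <= 1.2904 -> 0 < s -> A * s < 1 ->
  s^2 <= Lam -> 14 < Y -> (1 + s + q) * (Lam * (Y - 2) + 2) + 2 * s <= A * (Lam * Y + 2).
Proof.
  intros HA Hq Hs HAs HL HY.
  assert (Hs1 : s < 0.3624) by nra.
  assert (H2 : 14 * s^2 + 2 <= Lam * Y + 2) by nra.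
  assert (H3 : (14 * s^2 + 2) * (0.4696 - s) <= (Lam * Y + 2) * (A - 1 - s - q)).
  { apply Rmult_le_compat; nra. }
  assert (H4 : 4.5 * s^2 <= 2 * Lam * (1 + s + q)) by nra.
  assert (H5 : 0 <= (14 * s^2 + 2) * (0.4696 - s) + 4.5 * s^2 - 2 * s) by nra.
  assert (E : A * (Lam * Y + 2) - ((1 + s + q) * (Lam * (Y - 2) + 2) + 2 * s)
     = (Lam * Y + 2) * (A - 1 - s - q) + 2 * Lam * (1 + s + q) - 2 * s) by ring.
  lra.
Qed.

Lemma csum_ext h1 h2 a n : (forall k, h1 k = h2 k) -> csum h1 a n = csum h2 a n.
Proof. intros H; revert a; induction n; intros a; simpl; auto. rewrite H, IHn; auto. Qed.

Theorem lemma10 (X Y : R) (f f1 f2 : R -> R) (lam Lam : R) :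
  1 <= Y ->
  (forall x, Ioc X (X + Y) x -> deriv_within (Ioc X (X + Y)) f x (f1 x)) ->
  (forall x, Ioc X (X + Y) x -> deriv_within (Ioc X (X + Y)) f1 x (f2 x)) ->
  (forall x, Ioc X (X + Y) x -> cont_within (Ioc X (X + Y)) f1 x) ->
  (forall x, Ioc X (X + Y) x -> cont_within (Ioc X (X + Y)) f2 x) ->
  0 < lam ->
  (forall x, Ioc X (X + Y) x -> lam <= f2 x <= Lam) ->
  Cmod (sum_int_range X Y (fun n => e (f (IZR n)))) / Y
  <= A_const * (sqrt (Lam ^ 2 / lam) + 2 / sqrt (lam * Y ^ 2)).
Proof.
  intros HY Hd1 Hd2 _ _ Hlam HB.
  pose proof A_bound as HA. pose proof PI_gt as HP1. pose proof PI_lt as HP2.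
  set (s := sqrt lam).
  assert (Hs : 0 < s) by (apply sqrt_lt_R0; lra).
  assert (Hs2 : s ^ 2 = lam) by (unfold s; apply pow2_sqrt; lra).
  assert (HH : Ioc X (X + Y) (X + Y)) by (unfold Ioc; lra).
  assert (HLl : lam <= Lam) by (destruct (HB _ HH); lra).
  assert (E1 : sqrt (Lam ^ 2 / lam) = Lam / s).
  { rewrite sqrt_div_alt by lra. rewrite sqrt_pow2 by lra. reflexivity. }
  assert (E2 : sqrt (lam * Y ^ 2) = s * Y).
  { rewrite sqrt_mult by nra. rewrite sqrt_pow2 by lra. reflexivity. }
  rewrite E1, E2.
  set (SS := sum_int_range X Y (fun n => e (f (IZR n)))).
  cut (Cmod SS <= A_const * (Lam * Y + 2) / s).
  { intros H. replace (A_const * (Lam / s + 2 / (s * Y))) with (A_const * (Lam * Y + 2) / s / Y)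
      by (field; lra).
    apply Rmult_le_compat_r; [apply Rlt_le, Rinv_0_lt_compat; lra | exact H]. }
  destruct (archimed X) as [U1 U2].
  destruct (base_Int_part (X + Y)) as [I1 I2].
  set (z := (Int_part (X + Y) - up X + 1)%Z).
  assert (Hz : 0 < IZR z) by (unfold z; rewrite plus_IZR, minus_IZR; lra).
  apply lt_IZR in Hz.
  set (N := Z.to_nat z).
  assert (HN : INR N = IZR (Int_part (X + Y)) - IZR (up X) + 1).
  { unfold N. rewrite INR_IZR_INZ, Z2Nat.id by lia. unfold z. rewrite plus_IZR, minus_IZR. ring. }
  set (x0 := IZR (up X)).
  set (phi := fun k : nat => f (x0 + INR k)).
  assert (ES : SS = csum (fun k => e (phi k)) 0 N).
  { unfold SS, sum_int_range. fold z. fold N. rewrite fold_csum. apply csum_ext.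
    intros k. unfold phi, x0. rewrite plus_IZR, <- INR_IZR_INZ. reflexivity. }
  assert (Htriv : Cmod SS < Y + 1).
  { rewrite ES. eapply Rle_lt_trans; [apply csum_triv; intros; right; apply Cmod_e|]. lra. }
  destruct (Rle_or_lt (s / A_const) Lam) as [CA|CB].
  {
    assert (s <= A_const * Lam).
    { assert (EE : s = s / A_const * A_const) by (field; lra). rewrite EE at 1. nra. }
    assert (Y + 1 <= A_const * (Lam * Y + 2) / s).
    { apply Rmult_le_reg_r with s; auto. unfold Rdiv. rewrite Rmult_assoc, Rinv_l by lra.
      destruct (Rle_or_lt s (2 * A_const)).
      - nra.
      - assert (A_const * s ^ 2 * Y <= A_const * Lam * Y).
        { apply Rmult_le_compat_r; [lra|]. apply Rmult_le_compat_l; lra. }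
        nra. }
    lra. }
  assert (HAs : A_const * s < 1).
  { assert (Lam * A_const < s).
    { assert (EE : s = s / A_const * A_const) by (field; lra). rewrite EE at 1. nra. }
    nra. }
  destruct (Rle_or_lt Y 14) as [Y14|Y14].
  { assert (15 <= A_const * (Lam * Y + 2) / s).
    { apply Rmult_le_reg_r with s; auto. unfold Rdiv. rewrite Rmult_assoc, Rinv_l by lra.
      assert (0 <= Lam * Y) by nra. nra. }
    lra. }
  assert (HN14 : (14 <= N)%nat).
  { assert (13 < INR N) by lra. destruct (le_lt_dec 14 N); auto.
    assert (INR N <= 13) by (replace 13 with (INR 13) by (simpl; lra); apply le_INR; lia). lra. }
  set (n := (N - 3)%nat).
  assert (HNn : N = (S n + 2)%nat) by (unfold n; lia).
  assert (Hn : INR n = INR N - 3).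
  { rewrite HNn. rewrite plus_INR, S_INR. simpl. ring. }
  set (d := fun k => phi (S k) - phi k).
  assert (Hder1 : forall y, X < y < X + Y -> derivable_pt_lim f y (f1 y)).
  { intros y Hy. apply (dw_to_dpl X Y); auto. apply Hd1. unfold Ioc; lra. }
  assert (Hder2 : forall y, X < y < X + Y -> derivable_pt_lim f1 y (f2 y)).
  { intros y Hy. apply (dw_to_dpl X Y); auto. apply Hd2. unfold Ioc; lra. }
  assert (Hsd : forall k, (S k < S n)%nat -> lam <= d (S k) - d k <= Lam).
  { intros k Hk. unfold d, phi.
    rewrite !S_INR.
    replace (x0 + (INR k + 1 + 1)) with ((x0 + INR k) + 2) by ring.
    replace (x0 + (INR k + 1)) with ((x0 + INR k) + 1) by ring.
    replace (f (x0 + INR k + 2) - f (x0 + INR k + 1) - (f (x0 + INR k + 1) - f (x0 + INR k)))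
      with (f (x0 + INR k + 2) - 2 * f (x0 + INR k + 1) + f (x0 + INR k)) by ring.
    apply (second_diff f f1 f2 X (X + Y) lam Lam); auto.
    - intros y Hy. apply HB. unfold Ioc; lra.
    - pose proof (pos_INR k). unfold x0. lra.
    - assert (INR k + 4 <= INR N) by (replace 4 with (INR 4) by (simpl; lra); rewrite <- plus_INR; apply le_INR; lia).
      unfold x0. lra. }
  set (del := s / 2).
  assert (Hdel : 0 < del <= 1/2) by (unfold del; split; nra).
  assert (OB := outer_bound phi lam del (S n) Hlam Hdel
                  (fun k Hk => proj1 (Hsd k Hk)) n (le_n _)).
  fold d in OB.
  assert (Hgrow : forall j, (j <= n)%nat -> d j - d 0%nat <= INR j * Lam).
  { induction j; intros Hj; [simpl; lra|]. rewrite S_INR.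
    assert (H1 := Hsd j ltac:(lia)). specialize (IHj ltac:(lia)). lra. }
  assert (HL : d n - d 0%nat <= Lam * (Y - 2)).
  { assert (H1 := Hgrow n (le_n _)). assert (INR n <= Y - 2) by lra.
    assert (INR n * Lam <= (Y - 2) * Lam) by (apply Rmult_le_compat_r; lra). lra. }
  set (x := PI * del).
  assert (Hx : 0 < x <= 0.6).
  { unfold x, del. split; [nra|].
    assert (s < 0.3624) by nra. nra. }
  assert (Hsx : 0 < sin x) by (apply sin_gt_0; unfold x, del; nra).
  assert (HBk : 1 / sin x + cos x / sin x <= 2 / x).
  { pose proof (KL_num x Hx).
    replace (1 / sin x + cos x / sin x) with ((1 + cos x) / sin x) by (field; lra).
    apply Rmult_le_reg_r with (sin x * x); [nra|].
    replace ((1 + cos x) / sin x * (sin x * x)) with (x * (1 + cos x)) by (field; lra).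
    replace (2 / x * (sin x * x)) with (2 * sin x) by (field; lra). lra. }
  set (q := 4 / PI).
  assert (Hq : 1.25 <= q <= 1.2904).
  { unfold q; split.
    - apply Rmult_le_reg_r with PI; [lra|]. unfold Rdiv; rewrite Rmult_assoc, Rinv_l; lra.
    - apply Rmult_le_reg_r with PI; [lra|]. unfold Rdiv; rewrite Rmult_assoc, Rinv_l; lra. }
  assert (Hx2 : 2 / x = q / s) by (unfold x, del, q; field; split; lra).
  assert (Hdl : 2 * del / lam = 1 / s) by (unfold del; rewrite <- Hs2; field; lra).
  fold x in OB. rewrite Hdl in OB.
  assert (HC0 : 1 / s + 1 + (1 / sin x + cos x / sin x) <= (1 + s + q) / s).
  { replace ((1 + s + q) / s) with (1 / s + 1 + q / s) by (field; lra). lra. }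
  assert (Hpos : 0 <= d n - d 0%nat + 2).
  { assert (forall j, (j <= n)%nat -> 0 <= d j - d 0%nat).
    { induction j; intros Hj; [lra|]. assert (H1 := Hsd j ltac:(lia)). specialize (IHj ltac:(lia)). lra. }
    specialize (H n (le_n _)). lra. }
  assert (OB2 : Cmod (csum (fun k => e (phi k)) 0 (S n)) <= (1 + s + q) / s * (Lam * (Y - 2) + 2)).
  { eapply Rle_trans; [exact OB|].
    assert (0 <= (1 + s + q) / s) by (apply Rdiv_le_0_compat; lra).
    apply Rle_trans with ((1 + s + q) / s * (d n - d 0%nat + 2)).
    - apply Rmult_le_compat_r; lra.
    - apply Rmult_le_compat_l; lra. }
  assert (T2 : Cmod (csum (fun k => e (phi k)) (0 + S n) 2) <= 2).
  { eapply Rle_trans; [apply csum_triv; intros; right; apply Cmod_e|]. simpl; lra. }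
  rewrite ES, HNn, csum_split.
  eapply Rle_trans; [apply Cmod_triangle|].
  assert (FN := final_num A_const s q Lam Y HA Hq Hs HAs ltac:(lra) Y14).
  assert (E3 : (1 + s + q) / s * (Lam * (Y - 2) + 2) + 2 = ((1 + s + q) * (Lam * (Y - 2) + 2) + 2 * s) / s)
    by (field; lra).
  assert (((1 + s + q) * (Lam * (Y - 2) + 2) + 2 * s) / s <= A_const * (Lam * Y + 2) / s).
  { apply Rmult_le_compat_r; [apply Rlt_le, Rinv_0_lt_compat; lra| lra]. }
  lra.
Qed.
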